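(* Fix $N=\{1,\dots,n\}$ and a cost function $C:2^N\to\mathbb{R}_{\ge0}$ with $C(\emptyset)=0$. Consider maps assigning to each probability distribution $\mathcal{D}$ over $2^N$ a vector $\phi^{\mathcal{D}}\in\mathbb{R}^n$. Among such maps, the data-dependent Shapley value $$\phi^{\mathcal{D}}_i=\sum_{S\subseteq N:\, i\in S}\Pr[S\sim\mathcal{D}]\cdot\frac{C(S)}{|S|}$$ is the unique one satisfying the following four axioms: (Balance) $\sum_{i\in N}\phi^{\mathcal{D}}_i=\mathbb{E}_{S\sim\mathcal{D}}[C(S)]$ for all $\mathcal{D}$; (Symmetry) for all $\mathcal{D}$ and all $i,j$, if $\Pr_{S\sim\mathcal{D}}[|S\cap\{i,j\}|=1]=0$ then $\phi^{\mathcal{D}}_i=\phi^{\mathcal{D}}_j$; (Zero element) for all $\mathcal{D}$ and all $i$, if $\Pr_{S\sim\mathcal{D}}[i\in S]=0$ then $\phi^{\mathcal{D}}_i=0$; (Additivity) for all $i$, all distributions $\mathcal{D}_1,\mathcal{D}_2$ and all $\alpha,\beta\ge0$ with $\alpha+\beta=1$, $\phi^{\alpha\mathcal{D}_1+\beta\mathcal{D}_2}_i=\alpha\phi^{\mathcal{D}_1}_i+\beta\phi^{\mathcal{D}_2}_i$, where $\alpha\mathcal{D}_1+\beta\mathcal{D}_2$ is the mixture with $\Pr[S\sim\alpha\mathcal{D}_1+\beta\mathcal{D}_2]=\alpha\Pr[S\sim\mathcal{D}_1]+\beta\Pr[S\sim\mathcal{D}_2]$. *)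

(* Defs.v *)
From mathcomp Require Import all_boot all_order all_algebra.
From mathcomp Require Import reals.
Set Implicit Arguments. Unset Strict Implicit. Unset Printing Implicit Defensive.
Import Order.TTheory GRing.Theory Num.Theory.
Local Open Scope ring_scope.

(* Players N = 'I_n (i.e. {0,..,n-1}, standing for {1,..,n}); coalitions {set 'I_n}.
   A distribution over 2^N is a function D giving Pr[S ~ D]. *)
Definition distr_fn (R : realType) (n : nat) := {ffun {set 'I_n} -> R}.

Definition is_distr (R : realType) (n : nat) (D : distr_fn R n) : Prop :=
  (forall S, 0 <= D S) /\ \sum_(S : {set 'I_n}) D S = 1.

Definition prob (R : realType) (n : nat) (D : distr_fn R n) (E : pred {set 'I_n}) : R :=
  \sum_(S : {set 'I_n} | E S) D S.

Definition expect_cost (R : realType) (n : nat) (C : {set 'I_n} -> R) (D : distr_fn R n) : R :=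
  \sum_(S : {set 'I_n}) D S * C S.

Definition mixture (R : realType) (n : nat) (a b : R) (D1 D2 : distr_fn R n) : distr_fn R n :=
  [ffun S => a * D1 S + b * D2 S].

Definition dd_shapley (R : realType) (n : nat) (C : {set 'I_n} -> R)
  (D : distr_fn R n) (i : 'I_n) : R :=
  \sum_(S : {set 'I_n} | i \in S) D S * (C S / (#|S|)%:R).

Definition value_map (R : realType) (n : nat) := distr_fn R n -> 'I_n -> R.

Definition ax_balance (R : realType) (n : nat) (C : {set 'I_n} -> R) (phi : value_map R n) : Prop :=
  forall D, is_distr D -> \sum_(i : 'I_n) phi D i = expect_cost C D.

Definition ax_symmetry (R : realType) (n : nat) (phi : value_map R n) : Prop :=
  forall D, is_distr D -> forall i j : 'I_n,
    prob D (fun S => #|S :&: [set i; j]| == 1%N) = 0 -> phi D i = phi D j.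

Definition ax_zero (R : realType) (n : nat) (phi : value_map R n) : Prop :=
  forall D, is_distr D -> forall i : 'I_n,
    prob D (fun S => i \in S) = 0 -> phi D i = 0.

Definition ax_additivity (R : realType) (n : nat) (phi : value_map R n) : Prop :=
  forall (i : 'I_n) D1 D2 (a b : R), is_distr D1 -> is_distr D2 ->
    0 <= a -> 0 <= b -> a + b = 1 ->
    phi (mixture a b D1 D2) i = a * phi D1 i + b * phi D2 i.

Definition satisfies_axioms (R : realType) (n : nat) (C : {set 'I_n} -> R) (phi : value_map R n) : Prop :=
  [/\ ax_balance C phi, ax_symmetry phi, ax_zero phi & ax_additivity phi].

(* Main.v *)
Require Import Defs.
From mathcomp Require Import all_boot all_order all_algebra.
From mathcomp Require Import reals.
From mathcomp Require Import ring lra.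
Import Order.TTheory GRing.Theory Num.Theory.
Local Open Scope ring_scope.

Section S.
Variables (R : realType) (n : nat) (C : {set 'I_n} -> R).
Hypothesis C0 : C set0 = 0.

Lemma dd_balance : ax_balance C (@dd_shapley R n C).
Proof.
move=> D _; rewrite /dd_shapley /expect_cost.
under eq_bigr do rewrite big_mkcond /=.
rewrite exchange_big /=; apply: eq_bigr => S _.
rewrite -big_mkcond /= sumr_const.
have [->|SN0] := eqVneq S set0; first by rewrite C0 mul0r !mulr0 mul0rn.
rewrite -mulrnAr -mulr_natr mulfVK //.
by rewrite pnatr_eq0 cards_eq0.
Qed.

Lemma eq0_of_prob {D : distr_fn R n} {E : pred {set 'I_n}} :
  is_distr D -> prob D E = 0 -> forall S, E S -> D S = 0.
Proof. by move=> [D0 _] /psumr_eq0P; apply => S _; apply: D0. Qed.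

Lemma dd_symmetry : ax_symmetry (@dd_shapley R n C).
Proof.
move=> D HD i j Hp; have Hz := eq0_of_prob HD Hp.
rewrite /dd_shapley big_mkcond [RHS]big_mkcond /=; apply: eq_bigr => S _.
case: (boolP (i \in S)) => iS; case: (boolP (j \in S)) => jS //.
- rewrite Hz ?mul0r //.
  have -> : S :&: [set i; j] = [set i].
    apply/setP => x; rewrite !inE; case: (eqVneq x i) => [->|xi] /=; rewrite ?iS //.
    by case: (eqVneq x j) => [->|]; rewrite ?(negbTE jS) ?andbF ?andbT.
  by rewrite cards1.
- rewrite Hz ?mul0r //.
  have -> : S :&: [set i; j] = [set j].
    apply/setP => x; rewrite !inE; case: (eqVneq x j) => [->|xj] /=; rewrite ?jS ?orbT ?andbT //.
    by case: (eqVneq x i) => [->|]; rewrite ?(negbTE iS) ?andbF ?andbT.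
  by rewrite cards1.
Qed.

Lemma dd_zero : ax_zero (@dd_shapley R n C).
Proof.
move=> D HD i /(eq0_of_prob HD) Hz; rewrite /dd_shapley big1 // => S iS.
by rewrite Hz ?mul0r.
Qed.

Lemma dd_additivity : ax_additivity (@dd_shapley R n C).
Proof.
move=> i D1 D2 a b _ _ _ _ _; rewrite /dd_shapley !mulr_sumr -big_split /=.
by apply: eq_bigr => S _; rewrite ffunE; ring.
Qed.


Definition delta (S : {set 'I_n}) : distr_fn R n := [ffun T => (T == S)%:R].

Lemma delta_distr S : is_distr (delta S).
Proof.
split=> [T|]; first by rewrite ffunE ler0n.
rewrite (bigD1 S) //= ffunE eqxx big1 ?addr0 // => T /negbTE TS.
by rewrite ffunE TS.
Qed.

Lemma dd_delta S i : dd_shapley C (delta S) i = if i \in S then C S / (#|S|)%:R else 0.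
Proof.
rewrite /dd_shapley; case: ifP => iS.
  rewrite (bigD1 S) //= ffunE eqxx mul1r big1 ?addr0 // => T /andP[_ /negbTE TS].
  by rewrite ffunE TS mul0r.
rewrite big1 // => T iT; rewrite ffunE; case: eqVneq => [TS|]; last by rewrite mul0r.
by move: iT; rewrite TS iS.
Qed.

Variable phi : value_map R n.
Hypothesis Hphi : satisfies_axioms C phi.

Lemma phi_delta S i : phi (delta S) i = dd_shapley C (delta S) i.
Proof.
case: Hphi => Hbal Hsym Hzero Hadd.
rewrite dd_delta; case: ifP => iS; last first.
  apply: Hzero; first exact: delta_distr.
  rewrite /prob big1 // => T iT; rewrite ffunE; case: eqVneq => // TS.
  by move: iT; rewrite TS iS.
have Hj : forall j, j \in S -> phi (delta S) j = phi (delta S) i.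
  move=> j jS; have [->//|ji] := eqVneq j i.
  apply: Hsym; first exact: delta_distr.
  rewrite /prob big1 // => T HT; rewrite ffunE; case: eqVneq => // TS.
  move: HT; rewrite TS.
  have -> : S :&: [set j; i] = [set j; i].
    by apply/setIidPr; apply/subsetP => x; rewrite !inE => /orP[]/eqP->.
  by rewrite cards2 ji.

have := Hbal _ (delta_distr S).
rewrite (bigID (fun j => j \in S)) /= [X in _ + X]big1; last first.
  move=> j /negbTE jS; apply: Hzero; first exact: delta_distr.
  rewrite /prob big1 // => T iT; rewrite ffunE; case: eqVneq => // TS.
  by move: iT; rewrite TS jS.
rewrite addr0 (eq_bigr (fun _ => phi (delta S) i)) // sumr_const.
have -> : expect_cost C (delta S) = C S.
  rewrite /expect_cost (bigD1 S) //= ffunE eqxx mul1r big1 ?addr0 // => T /negbTE TS.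
  by rewrite ffunE TS mul0r.
move=> <-.
rewrite -[phi (delta S) i *+ _]mulr_natr mulfK //.
rewrite pnatr_eq0 -lt0n card_gt0.
by apply/set0Pn; exists i.
Qed.

Definition supp (D : distr_fn R n) := [set T | D T != 0].

Lemma main k : forall D, is_distr D -> (#|supp D| <= k)%N ->
  forall i, phi D i = dd_shapley C D i.
Proof.
case: (Hphi) => Hbal Hsym Hzero Hadd.
elim: k => [|k IH] D HD Hk i.
all: case: (pickP (fun T => D T != 0)) => [S DS|none]; last first.
1,3: case: HD => _; rewrite big1 => [/eqP|T _]; [by rewrite eq_sym oner_eq0|].
1,2: by move: (none T) => /= /negbFE/eqP.
  have : (0 < #|supp D|)%N by rewrite card_gt0; apply/set0Pn; exists S; rewrite inE.
  by rewrite leqn0 in Hk; rewrite (eqP Hk).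
case: (HD) => Hge Hsum.
have Hsplit := Hsum; rewrite (bigD1 S) //= in Hsplit.
set rest := \sum_(T | T != S) D T in Hsplit.
have rest_ge0 : 0 <= rest by apply: sumr_ge0 => T _; apply: Hge.
have [DS1|DSn1] := eqVneq (D S) 1.
  have Hr : rest = 0 by move: Hsplit; rewrite DS1; lra.
  have -> : D = delta S.
    apply/ffunP => T; rewrite ffunE; case: eqVneq => [->//|TS].
    exact: (psumr_eq0P (fun T _ => Hge T) Hr).
  exact: phi_delta.
set a := D S; set b := 1 - a.
have Hb : rest = b by rewrite /b -Hsplit /a addrC addrK.
have b_gt0 : 0 < b.
  rewrite lt_neqAle -Hb rest_ge0 andbT eq_sym; apply/negP => /eqP r0.
  by move: Hsplit; rewrite r0 addr0 => /eqP; rewrite (negbTE DSn1).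
have b_neq0 : b != 0 by rewrite gt_eqF.
set D' : distr_fn R n := [ffun T => if T == S then 0 else D T / b].
have HD' : is_distr D'.
  split=> [T|]; first by rewrite ffunE; case: ifP => // _; rewrite divr_ge0 // ltW.
  rewrite (bigD1 S) //= ffunE eqxx add0r.
  rewrite (eq_bigr (fun T => D T / b)); last by move=> T /negbTE TS; rewrite ffunE TS.
  by rewrite -mulr_suml -/rest Hb mulfV.
have Hmix : D = mixture a b (delta S) D'.
  apply/ffunP => T; rewrite !ffunE; case: eqVneq => [->|TS].
    by rewrite /b /a mulr1 mulr0 addr0.
  by rewrite mulr0 add0r mulrC divfK.
have Hcard : (#|supp D'| <= k)%N.
  have : (#|supp D'| <= #|supp D :\ S|)%N.
    apply: subset_leq_card; apply/subsetP => T; rewrite !inE ffunE.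
    case: (eqVneq T S) => /= _; first by rewrite eqxx.
    by rewrite mulf_eq0 invr_eq0 (negbTE b_neq0) orbF.
  move: Hk; rewrite (cardsD1 S (supp D)) inE DS /= add1n ltnS.
  by move=> h1 h2; apply: leq_trans h2 h1.
have a_ge0 : 0 <= a by apply: Hge.
have ab1 : a + b = 1 by rewrite /b addrC subrK.
have b_ge0 : 0 <= b by exact: ltW.
rewrite Hmix (Hadd i (delta S) D' a b (delta_distr S) HD' a_ge0 b_ge0 ab1).
by rewrite phi_delta (IH D' HD' Hcard) (dd_additivity i (delta S) D' a b (delta_distr S) HD' a_ge0 b_ge0 ab1).
Qed.

End S.

Theorem theorem10 (R : realType) (n : nat) (C : {set 'I_n} -> R)
  (C_ge0 : forall S, 0 <= C S) (C0 : C set0 = 0) :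
  satisfies_axioms C (@dd_shapley R n C) /\
  (forall phi : value_map R n, satisfies_axioms C phi ->
     forall D, is_distr D -> forall i, phi D i = dd_shapley C D i).
Proof.
split.
  split; [exact: dd_balance | exact: dd_symmetry | exact: dd_zero | exact: dd_additivity].
move=> phi Hphi D HD i; exact: (@main R n C phi Hphi _ D HD (leqnn _) i).
Qed.
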